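(* In the setting and notation described in the context, assume (A5) and (A6). Then for every $\gamma_0$ with $0<\gamma_0<\tilde\gamma_0=(1-\gamma_{10})/2$, as $n\to\infty$, $$P\left(\{\Delta_{p_0,n}\le n^{-\gamma_0}\}\cap\{\Delta_{2,n}\le n^{-\gamma_0}\}\cap\{\Delta_{p_0+1,n}\le n^{-\gamma_0}\}\cap\{\Delta_{p_0+M-1,n}\le n^{-\gamma_0}\}\right)\to1.$$
   Context: Setting. $n=1,2,\ldots$ indexes a sequence of problems; for each $n$: an integer $p=p_n$, fixed integers $p_0,M$ (independent of $n$) with $1\le p_0\le M$, $p_0<p$; a continuous $f_n:[0,1]^p\to\mathbb{R}$; design points $\mathbf{x}_i=(x_{i1},\ldots,x_{ip})'$, $i=1,\ldots,n$, forming the rows of the $n\times p$ matrix $\mathbf{X}$. $Z_d=\{1,\ldots,d\}$, $\mathcal{A}_0=Z_{p_0}$; $\mathbf{x}_{\mathcal{A}}$, $\mathbf{X}_{\mathcal{A}}$ are the subvector/column-submatrix indexed by $\mathcal{A}\subset Z_p$. $a_n=O(n^\gamma)$ means $|a_n|\le cn^\gamma$ for a constant $c$ and large $n$. Discrepancy: for an $m\times d$ matrix $\mathbf{A}$ with rows $\mathbf{a}_i'\in[0,1]^d$, $\delta_{d,m}(\mathbf{A})=\sup_{\mathbf{x}\in[0,1]^d}|F_m(\mathbf{x})-\prod_kx_k|$, $F_m(\mathbf{x})=\frac1m\#\{i:a_{ik}\le x_k\ \forall k\}$. Sets: $\mathcal{U}_1=\{\mathcal{A}\subset Z_p:|\mathcal{A}|=M,\mathcal{A}_0\setminus\mathcal{A}\ne\emptyset\}$,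 $\mathcal{U}_2=\{\mathcal{A}\subset Z_p:|\mathcal{A}|=2\}$, $\mathcal{U}_3=\{\mathcal{A}_0\cup I_1:I_1\subset Z_p\setminus\mathcal{A}_0,|I_1|=1\}$, $\mathcal{U}_4=\{\mathcal{A}_0\cup I_2:I_2\subset Z_p\setminus\mathcal{A}_0,|I_2|=M-1\}$. $\Delta_{p_0,n}=\delta_{p_0,n}(\mathbf{X}_{\mathcal{A}_0})$, $\Delta_{2,n}=\max_{\mathcal{A}\in\mathcal{U}_2}\delta_{2,n}(\mathbf{X}_{\mathcal{A}})$, $\Delta_{p_0+1,n}=\max_{\mathcal{A}\in\mathcal{U}_3}\delta_{p_0+1,n}(\mathbf{X}_{\mathcal{A}})$, $\Delta_{p_0+M-1,n}=\max_{\mathcal{A}\in\mathcal{U}_4}\delta_{p_0+M-1,n}(\mathbf{X}_{\mathcal{A}})$. Also given for each $n$: $\widetilde f_n\in C[0,1]^{p_0}$ and $\eta_n>0$. Subset best linear approximation: $(\beta_0(\mathcal{A}),\boldsymbol\beta(\mathcal{A})')'$ minimizes $\int_{[0,1]^p}[f_n(\mathbf{x})-\phi_0-\boldsymbol\phi'\mathbf{x}_{\mathcal{A}}]^2d\mathbf{x}$; $\boldsymbol\beta_{Z_p}(\mathcal{A})\in\mathbb{R}^p$ equals $\boldsymbol\beta(\mathcal{A})$ on $\mathcal{A}$ and $0$ elsewhere. Hardy–Krause variation $V_{HK}$: for $g:[0,1]^d\to\mathbb{R}$, $V_{HK}(g)=\sum_{\emptyset\ne u\subset Z_d}V^{Vit}(g_u)$,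 where $g_u$ is $g$ with $x_k=1$ for $k\notin u$ and $V^{Vit}$ is the Vitali variation (supremum over finite partitions into axis-parallel sub-rectangles $J$ of $\sum|\Delta_J|$, $\Delta_J$ the alternating-sign vertex sum); functions of some coordinates of $\mathbf{x}\in[0,1]^p$ are regarded as functions on $[0,1]^p$. $C_{1n}=\max_{j\le p}\max(V_{HK}(\widetilde f_n),V_{HK}(x_j\widetilde f_n))$; $C_{2n}=\max_{\mathbf{x}}|f_n(\mathbf{x})|$; $C_{3n}=\max_{\mathbf{x}}|\widetilde f_n(\mathbf{x}_{\mathcal{A}_0})-\mathbf{x}'\boldsymbol\beta_{Z_p}(\mathcal{A}_0)-\beta_0(\mathcal{A}_0)|$; $C_{4n}=\max_{\mathcal{A}\in\mathcal{U}_1}\max_{\mathbf{x}}|\widetilde f_n(\mathbf{x}_{\mathcal{A}_0})-\mathbf{x}'\boldsymbol\beta_{Z_p}(\mathcal{A})-\beta_0(\mathcal{A})|$; $V_{1n}=V_{HK}(\widetilde f_n(\mathbf{x}_{\mathcal{A}_0})-\beta_0(\mathcal{A}_0)-\mathbf{x}'\boldsymbol\beta_{Z_p}(\mathcal{A}_0))$; $V_{2n}=\max_{\mathcal{A}\in\mathcal{U}_1}V_{HK}(\widetilde f_n(\mathbf{x}_{\mathcal{A}_0})-\beta_0(\mathcal{A})-\mathbf{x}'\boldsymbol\beta_{Z_p}(\mathcal{A}))$ (maxima over $\mathbf{x}\in[0,1]^p$). (A5): the entries $x_{ij}$ are i.i.d. uniform on $[0,1)$. (A6): $\eta_n=O(n^{-\gamma_1})$,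 $V_{1n}=O(n^{\gamma_2})$, $V_{2n}=O(n^{\gamma_3})$, $C_{1n}=O(n^{\gamma_4})$, $C_{2n}=O(n^{\gamma_5})$, $C_{3n}=O(n^{\gamma_6})$, $C_{4n}=O(n^{\gamma_7})$, $\log p=O(n^{\gamma_{10}})$, where $\gamma_1,\gamma_{10}>0$, $\gamma_{10}<1$, and with $\tilde\gamma_0=(1-\gamma_{10})/2$: $\gamma_2,\gamma_3,\gamma_4,\gamma_5<\tilde\gamma_0$, $\gamma_6,\gamma_7<\gamma_1$, $\gamma_4+\gamma_6<\tilde\gamma_0$, $\gamma_5+\gamma_6<\tilde\gamma_0$, $\gamma_4+\gamma_7<\tilde\gamma_0$, $\gamma_5+\gamma_7<\tilde\gamma_0$. *)

(* Defs.v *)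
From HB Require Import structures.
From mathcomp Require Import all_boot all_order all_algebra.
From mathcomp Require Import all_classical all_reals all_analysis.
Set Implicit Arguments. Unset Strict Implicit. Unset Printing Implicit Defensive.
Import Order.TTheory GRing.Theory Num.Theory.
Import numFieldNormedType.Exports.
Local Open Scope classical_set_scope.
Local Open Scope ring_scope.

Section Defs.
Variable R : realType.

Definition cube (d : nat) : set 'rV[R]_d :=
  [set x | forall k : 'I_d, 0 <= x ord0 k <= 1].

Definition disc (m d : nat) (A : 'M[R]_(m, d)) : R :=
  sup ((fun x : 'rV[R]_d => `| (#|[set i : 'I_m | [forall k, A i k <= x ord0 k]]|%:R / m%:R)
              - \prod_(k < d) x ord0 k |) @` @cube d).

(* column submatrix X_A (columns of A in increasing order) *)
Definition subm (n p : nat) (X : 'M[R]_(n, p)) (A : {set 'I_p}) : 'M[R]_(n, #|A|) :=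
  colsub (fun k : 'I_#|A| => enum_val k) X.

(* A_0 = Z_{p0} = {1,...,p0}, i.e. the first p0 coordinates *)
Definition A0 (p p0 : nat) : {set 'I_p} := [set k : 'I_p | (k < p0)%N].

Definition inU1 (p p0 M : nat) (A : {set 'I_p}) : bool :=
  (#|A| == M) && (A0 p p0 :\: A != finset.set0).
Definition inU2 (p : nat) (A : {set 'I_p}) : bool := #|A| == 2.
Definition inU3 (p p0 : nat) (A : {set 'I_p}) : bool :=
  [exists I1 : {set 'I_p},
     [&& I1 \subset ~: A0 p p0, #|I1| == 1 & A == A0 p p0 :|: I1]].
Definition inU4 (p p0 M : nat) (A : {set 'I_p}) : bool :=
  [exists I2 : {set 'I_p},
     [&& I2 \subset ~: A0 p p0, #|I2| == (M - 1)%N & A == A0 p p0 :|: I2]].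

(* the four maximal discrepancies (discrepancies are >= 0, so 0 is a neutral base) *)
Definition Delta_p0 (n p p0 : nat) (X : 'M[R]_(n, p)) : R := disc (subm X (A0 p p0)).
Definition Delta_2 (n p : nat) (X : 'M[R]_(n, p)) : R :=
  \big[Num.max/0]_(A : {set 'I_p} | inU2 A) disc (subm X A).
Definition Delta_p0_1 (n p p0 : nat) (X : 'M[R]_(n, p)) : R :=
  \big[Num.max/0]_(A : {set 'I_p} | inU3 p0 A) disc (subm X A).
Definition Delta_p0_M1 (n p p0 M : nat) (X : 'M[R]_(n, p)) : R :=
  \big[Num.max/0]_(A : {set 'I_p} | inU4 p0 M A) disc (subm X A).

Definition restr (d e : nat) (x : 'rV[R]_d) : 'rV[R]_e :=
  \row_(k < e) odflt 0 (omap (fun j : 'I_d => x ord0 j) (insub (val k))).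

(* iterated (Fubini) Lebesgue integral over [0,1]^d of g, which depends on coordinates 0..d-1 *)
Fixpoint iint (d : nat) (g : (nat -> R) -> R) : R :=
  match d with
  | 0 => g (fun _ => 0)
  | d'.+1 => Rintegral (@lebesgue_measure R) `[0, 1]
               (fun t => iint d' (fun y => g (fun i => if i == d' then t else y i)))
  end.

Definition L2err (d : nat) (f : 'rV[R]_d -> R) (phi0 : R) (phi : 'I_d -> R) : R :=
  iint d (fun y => (f (\row_(k < d) y k) - phi0 - \sum_(k < d) phi k * y k) ^+ 2).

(* (b0, b) is the best linear approximation of f using the variables in A;
   b is beta_{Z_p}(A), i.e. extended by 0 outside A *)
Definition bestlin (d : nat) (f : 'rV[R]_d -> R) (A : {set 'I_d}) (b0 : R) (b : 'I_d -> R) :=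
  (forall j, j \notin A -> b j = 0) /\
  forall (phi0 : R) (phi : 'I_d -> R), (forall j, j \notin A -> phi j = 0) ->
    L2err f b0 b <= L2err f phi0 phi.

Definition linpart (d : nat) (x : 'rV[R]_d) (b : 'I_d -> R) : R :=
  \sum_(j < d) x ord0 j * b j.

(* Vitali variation on the face {x_k = 1, k notin u}, computed over grid partitions
   with N cells per direction (degenerate cells allowed) *)
Definition grid (d N : nat) (t : 'I_d -> nat -> R) : Prop :=
  forall k, t k 0%N = 0 /\ t k N = 1 /\ forall i, (i < N)%N -> t k i <= t k i.+1.

Definition vit_sum (d : nat) (u : {set 'I_d}) (g : 'rV[R]_d -> R) (N : nat)
  (t : 'I_d -> nat -> R) : R :=
  \sum_(c : {ffun 'I_d -> 'I_N} | [forall k, (k \notin u) ==> (val (c k) == 0%N)])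
    `| \sum_(v : {set 'I_d} | v \subset u)
         (-1) ^+ #|u :\: v| *
         g (\row_(k < d) (if k \in u then (if k \in v then t k (c k).+1 else t k (c k))
                          else 1)) |.

Definition vitali (d : nat) (u : {set 'I_d}) (g : 'rV[R]_d -> R) : \bar R :=
  ereal_sup [set y : \bar R | exists N t, grid N t /\ y = (vit_sum u g N t)%:E].

Definition VHK (d : nat) (g : 'rV[R]_d -> R) : \bar R :=
  (\sum_(u : {set 'I_d} | u != finset.set0) vitali u g)%E.

(* a_n = O(n^g) for families of quantities indexed by n (uniformly in an index) *)
Definition bigO_unif (a : nat -> R -> Prop) (g : R) : Prop :=
  exists c : R, exists N : nat, forall n, (N <= n)%N ->
    forall r, a n r -> `|r| <= c * (n%:R `^ g).
Definition bigO_ebar (a : nat -> \bar R -> Prop) (g : R) : Prop :=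
  exists c : R, exists N : nat, forall n, (N <= n)%N ->
    forall r, a n r -> (`|r| <= (c * (n%:R `^ g))%:E)%E.

Definition A5 (dT : measure_display) (T : measurableType dT) (P : probability T R)
  (p : nat -> nat) (X : forall n, T -> 'M[R]_(n, p n)) : Prop :=
  forall n,
    (forall i j, measurable_fun setT (fun w => X n w i j)) /\
    (forall i j (B : set R), measurable B ->
       P [set w | B (X n w i j)] = (@lebesgue_measure R) (B `&` `[0, 1[)) /\
    (forall (J : {set 'I_n * 'I_(p n)}) (B : 'I_n * 'I_(p n) -> set R),
       (forall k, measurable (B k)) ->
       P [set w | forall k, k \in J -> B k (X n w k.1 k.2)] =
       (\prod_(k in J) P [set w | B k (X n w k.1 k.2)])%E).

Definition A6 (p : nat -> nat) (p0 M : nat)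
  (f : forall n, 'rV[R]_(p n) -> R) (ft : forall n, 'rV[R]_p0 -> R) (eta : nat -> R)
  (beta0 : forall n, {set 'I_(p n)} -> R) (beta : forall n, {set 'I_(p n)} -> 'I_(p n) -> R)
  (g1 g2 g3 g4 g5 g6 g7 g10 : R) : Prop :=
  let gt0 := (1 - g10) / 2 in
  let ftp n (x : 'rV[R]_(p n)) := ft n (restr p0 x) in
  let A0n n := A0 (p n) p0 in
  bigO_unif (fun n r => r = eta n) g1 /\
  bigO_ebar (fun n r => r = VHK (fun x => ftp n x - beta0 n (A0n n)
                                          - linpart x (beta n (A0n n)))) g2 /\
  bigO_ebar (fun n r => exists A, inU1 p0 M A /\
               r = VHK (fun x => ftp n x - beta0 n A - linpart x (beta n A))) g3 /\
  bigO_ebar (fun n r => r = VHK (ftp n) \/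
               exists j, r = VHK (fun x => x ord0 j * ftp n x)) g4 /\
  bigO_unif (fun n r => exists x, @cube (p n) x /\ r = f n x) g5 /\
  bigO_unif (fun n r => exists x, @cube (p n) x /\
               r = ftp n x - linpart x (beta n (A0n n)) - beta0 n (A0n n)) g6 /\
  bigO_unif (fun n r => exists A x, inU1 p0 M A /\ @cube (p n) x /\
               r = ftp n x - linpart x (beta n A) - beta0 n A) g7 /\
  bigO_unif (fun n r => r = ln (p n)%:R) g10 /\
  0 < g1 /\ 0 < g10 /\ g10 < 1 /\
  g2 < gt0 /\ g3 < gt0 /\ g4 < gt0 /\ g5 < gt0 /\ g6 < g1 /\ g7 < g1 /\
  g4 + g6 < gt0 /\ g5 + g6 < gt0 /\ g4 + g7 < gt0 /\ g5 + g7 < gt0.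

End Defs.
Arguments cube {R} d _.

(* Main.v *)
Require Import Defs.
From HB Require Import structures.
From mathcomp Require Import all_boot all_order all_algebra.
From mathcomp Require Import all_classical all_reals all_analysis.
Import Order.TTheory GRing.Theory Num.Theory.
Import numFieldNormedType.Exports.
Local Open Scope classical_set_scope.
Local Open Scope ring_scope.
Set Implicit Arguments. Unset Strict Implicit. Unset Printing Implicit Defensive.
From mathcomp Require Import lra ring.
Section Prob.
Variables (R : realType) (dT : measure_display) (T : measurableType dT).
Variable (P : probability T R).

Definition mu (A : set T) : R := fine (P A).

Lemma muE A : measurable A -> P A = (mu A)%:E.
Proof. by move=> mA; rewrite /mu fineK // fin_num_measure. Qed.

Lemma mu_ge0 A : 0 <= mu A.
Proof. by rewrite /mu fine_ge0 // measure_ge0. Qed.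

Lemma mu_le1 A : measurable A -> mu A <= 1.
Proof. by move=> mA; rewrite -lee_fin -muE // probability_le1. Qed.

Lemma mu_le A B : measurable A -> measurable B -> A `<=` B -> mu A <= mu B.
Proof.
move=> mA mB AB; rewrite -lee_fin -!muE //; apply: le_measure => //; by rewrite inE.
Qed.

Lemma mu_setC A : measurable A -> mu (~` A) = 1 - mu A.
Proof.
move=> mA; apply: EFin_inj; rewrite -muE; last exact: measurableC.
by rewrite probability_setC // muE.
Qed.

Lemma meas_forall_seq (I : eqType) (S : I -> set T) (s : seq I) :
  (forall i, measurable (S i)) -> measurable [set w | forall i, i \in s -> S i w].
Proof.
move=> mS; elim: s => [|a s IH].
  by rewrite (_ : [set w | _] = setT); [exact: measurableT | apply/seteqP; split].
rewrite (_ : [set w | _] = S a `&` [set w | forall i, i \in s -> S i w]).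
  exact: measurableI.
apply/seteqP; split => w /=.
  by move=> H; split; [apply: H; rewrite inE eqxx | move=> i iS; apply: H; rewrite inE iS orbT].
by case=> Ha Hs i; rewrite inE => /orP[/eqP->//|]; apply: Hs.
Qed.

Lemma meas_forall (I : finType) (Q : pred I) (S : I -> set T) :
  (forall i, measurable (S i)) -> measurable [set w | forall i, Q i -> S i w].
Proof.
move=> mS; rewrite (_ : [set w | _] = [set w | forall i, i \in enum Q -> S i w]).
  exact: meas_forall_seq.
by apply/seteqP; split => w /= H i; [rewrite mem_enum; apply: H | move=> Qi; apply: H; rewrite mem_enum].
Qed.

Lemma meas_bool (I : finType) (b : I -> T -> bool) :
  (forall i, measurable [set w | b i w]) -> measurable [set w | [forall i, b i w]].
Proof.
move=> mb; rewrite (_ : [set w | _] = [set w | forall i, true -> [set w | b i w] w]).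
  exact: meas_forall.
by apply/seteqP; split => w /=; [move/forallP => H i _; apply: H | move=> H; apply/forallP => i; exact: H].
Qed.

Section Pat.
Variables (I : finType) (pat : T -> I).
Hypothesis mfib : forall K, measurable [set w | pat w = K].

Lemma pat_seq (s : seq I) : uniq s ->
  measurable [set w | pat w \in s] /\
  mu [set w | pat w \in s] = \sum_(K <- s) mu [set w | pat w = K].
Proof.
elim: s => [|a s IH] /=.
  rewrite big_nil (_ : [set w | _] = set0); last by apply/seteqP; split => w.
  by split; [exact: measurable0 | rewrite /mu measure0].
move=> /andP[aS us]; have [ms es] := IH us.
have -> : [set w | pat w \in a :: s] = [set w | pat w = a] `|` [set w | pat w \in s].
  apply/seteqP; split => w /=; rewrite inE.
    by case/orP => [/eqP->|H]; [left|right].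
  by case=> [->|H]; rewrite ?eqxx ?H ?orbT.
split; first exact: measurableU.
rewrite big_cons -es; apply: EFin_inj; rewrite EFinD -!muE //;
  last exact: measurableU.
rewrite measureU //; apply/seteqP; split => w //= [-> H]; by rewrite H in aS.
Qed.

Lemma meas_pat (Q : pred I) : measurable [set w | Q (pat w)].
Proof.
have [m _] := @pat_seq (enum Q) (enum_uniq Q).
by rewrite (_ : [set w | _] = [set w | pat w \in enum Q]) //; apply/seteqP; split=> w /=; rewrite mem_enum.
Qed.

Lemma mu_pat (Q : pred I) : mu [set w | Q (pat w)] = \sum_(K | Q K) mu [set w | pat w = K].
Proof.
have [_ e] := @pat_seq (enum Q) (enum_uniq Q).
rewrite (_ : [set w | _] = [set w | pat w \in enum Q]); last by apply/seteqP; split=> w /=; rewrite mem_enum.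
rewrite e big_enum_cond /=; by apply: eq_bigl => K; rewrite andbT.
Qed.
End Pat.

Lemma union_bound (I : finType) (Q : pred I) (E : I -> set T) :
  (forall i, measurable (E i)) ->
  mu [set w | exists i, Q i /\ E i w] <= \sum_(i | Q i) mu (E i).
Proof.
move=> mE.
suff H : forall s : seq I, measurable [set w | exists i, i \in s /\ E i w] /\
   mu [set w | exists i, i \in s /\ E i w] <= \sum_(i <- s) mu (E i).
  have [_ h] := H (enum Q).
  rewrite (_ : [set w | _] = [set w | exists i, i \in enum Q /\ E i w]).
    apply: (le_trans h); rewrite big_enum_cond /=.
    by rewrite le_eqVlt; apply/orP; left; apply/eqP; apply: eq_bigl => i; rewrite andbT.
  by apply/seteqP; split=> w /= [i [Qi Ei]]; exists i; rewrite ?mem_enum in Qi *.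
elim=> [|a s [ms IH]].
  rewrite (_ : [set w | _] = set0); last by apply/seteqP; split => w // [i []].
  by rewrite big_nil /mu measure0; split; [exact: measurable0|].
have -> : [set w | exists i, i \in a :: s /\ E i w] = E a `|` [set w | exists i, i \in s /\ E i w].
  apply/seteqP; split => w /=.
    by move=> [i []]; rewrite inE => /orP[/eqP->|iS Ei]; [left|right; exists i].
  by case=> [Ea|[i [iS Ei]]]; [exists a; rewrite inE eqxx | exists i; rewrite inE iS orbT].
split; first exact: measurableU.
rewrite big_cons; apply: (le_trans _ (lerD (lexx _) IH)).
rewrite -lee_fin EFinD -!muE //; last exact: measurableU.
exact: measureU2.
Qed.

End Prob.

Lemma sum_subset_pow (R : realType) (I : finType) (K : {set I}) (a : R) :
  \sum_(J : {set I} | J \subset K) a ^+ #|J| = (1 + a) ^+ #|K|.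
Proof.
have := bigA_distr 1 (@GRing.add R) (fun i => if i \in K then a else 0) (fun _ => 1).
have -> : \prod_i ((if i \in K then a else 0) + 1) = \prod_(i in K) (1 + a).
  rewrite [RHS]big_mkcond; apply: eq_bigr => i _; case: ifP => _; by rewrite ?add0r // addrC.
rewrite prodr_const => ->.
rewrite [LHS]big_mkcond /=; apply: eq_bigr => J _.
case: ifP => JK.
  rewrite -prodr_const [LHS]big_mkcond; apply: eq_bigr => i _.
  by case: ifP => // iJ; rewrite (fintype.subsetP JK _ iJ).
have [i iJ iK] : exists2 i, i \in J & i \notin K.
  by move/negbT: JK => /subsetPn [i iJ iK]; exists i.
by rewrite (bigD1 i) //= iJ (negbTE iK) mul0r.
Qed.


Section Chernoff.
Variables (R : realType) (dT : measure_display) (T : measurableType dT).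
Variable (P : probability T R).
Variables (n : nat) (Row : 'I_n -> T -> bool) (q : R).
Hypothesis mRow : forall i, measurable [set w | Row i w].
Hypothesis q0 : 0 <= q.
Hypothesis q1 : q <= 1.
Let pat w : {set 'I_n} := [set i | Row i w]%SET.
Hypothesis HI : forall J : {set 'I_n}, mu P [set w | J \subset pat w] = q ^+ #|J|.

Lemma mfib K : measurable [set w | pat w = K].
Proof.
rewrite (_ : [set w | _] = [set w | [forall i, Row i w == (i \in K)]]).
  apply: meas_bool => i; case: (i \in K).
    by rewrite (_ : [set w | _] = [set w | Row i w]) //; apply/seteqP; split => w /=; rewrite eqb_id.
  rewrite (_ : [set w | _] = ~` [set w | Row i w]); first exact: measurableC.
  by apply/seteqP; split => w /=; rewrite eqbF_neg => /negP.
apply/seteqP; split => w /=.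
  by move=> <-; apply/forallP => i; rewrite /pat inE.
by move/forallP => H; apply/setP => i; rewrite /pat inE; apply/eqP.
Qed.

Let pi K := mu P [set w | pat w = K].

Lemma pi_ge0 K : 0 <= pi K.
Proof. exact: mu_ge0. Qed.

Lemma gen_fun (z : R) : \sum_(K : {set 'I_n}) pi K * z ^+ #|K| = (1 + (z - 1) * q) ^+ n.
Proof.
transitivity (\sum_(K : {set 'I_n}) \sum_(J : {set 'I_n} | J \subset K) pi K * (z - 1) ^+ #|J|).
  apply: eq_bigr => K _; rewrite -mulr_sumr sum_subset_pow.
  by rewrite addrC subrK.
rewrite (exchange_big_dep xpredT) //=.
transitivity (\sum_(J : {set 'I_n}) ((z - 1) * q) ^+ #|J|).
  apply: eq_bigr => J _; rewrite -mulr_suml exprMn mulrC -HI.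
  congr (_ * _); rewrite (@mu_pat _ _ _ _ _ pat mfib (fun K => J \subset K)).
  by apply: eq_bigl => K.
have := sum_subset_pow [set: 'I_n] ((z - 1) * q); rewrite cardsT card_ord => <-.
by apply: eq_bigl => J; rewrite finset.subsetT.
Qed.

Lemma sum_sub_le (Q : pred {set 'I_n}) (F : {set 'I_n} -> R) :
  (forall K, 0 <= F K) -> \sum_(K | Q K) F K <= \sum_K F K.
Proof.
move=> F0; rewrite big_mkcond /=; apply: ler_sum => K _.
by case: ifP => _ //.
Qed.

Lemma tail_up (s th : R) : 0 <= s ->
  \sum_(K : {set 'I_n} | th <= #|K|%:R) pi K <= expR (- (s * th)) * (1 + (expR s - 1) * q) ^+ n.
Proof.
move=> s0; rewrite -gen_fun mulr_sumr.
apply: (le_trans _ (sum_sub_le (fun K => th <= #|K|%:R) _)); last first.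
  by move=> K; rewrite mulr_ge0 // ?mulr_ge0 ?pi_ge0 ?expR_ge0 // exprn_ge0 // expR_ge0.
apply: ler_sum => K HK.
rewrite mulrCA -{1}[pi K]mulr1; apply: ler_wpM2l; first exact: pi_ge0.
rewrite -expRM_natl -expRD.
apply: (le_trans _ (expR_ge1Dx _)).
by rewrite lerDl; nra.
Qed.

Lemma tail_lo (s th : R) : 0 <= s ->
  \sum_(K : {set 'I_n} | #|K|%:R <= th) pi K <= expR (s * th) * (1 + (expR (- s) - 1) * q) ^+ n.
Proof.
move=> s0; rewrite -gen_fun mulr_sumr.
apply: (le_trans _ (sum_sub_le (fun K => #|K|%:R <= th) _)); last first.
  by move=> K; rewrite mulr_ge0 // ?mulr_ge0 ?pi_ge0 ?expR_ge0 // exprn_ge0 // expR_ge0.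
apply: ler_sum => K HK.
rewrite mulrCA -{1}[pi K]mulr1; apply: ler_wpM2l; first exact: pi_ge0.
rewrite -expRM_natl -expRD.
apply: (le_trans _ (expR_ge1Dx _)).
by rewrite lerDl; nra.
Qed.


Lemma dev (t : R) : 0 < t -> t <= 1 -> (0 < n)%N ->
  mu P [set w | t < `|#|pat w|%:R / n%:R - q|] <= 2 * expR (- (n%:R * t ^+ 2 / 8)).
Proof.
move=> t0 t1 n0; have qq0 := q0; have qq1 := q1.
have N0 : (0 : R) < n%:R by rewrite ltr0n.
rewrite (@mu_pat _ _ _ _ _ pat mfib (fun K => t < `|#|K|%:R / n%:R - q|)).
set s := t / 4.
have s0 : 0 <= s by rewrite /s; lra.
apply: (@le_trans _ _ (\sum_(K : {set 'I_n} | n%:R * (q + t) <= #|K|%:R) pi K +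
   \sum_(K : {set 'I_n} | #|K|%:R <= n%:R * (q - t)) pi K)).
  rewrite big_mkcond [X in _ <= X + _]big_mkcond [X in _ <= _ + X]big_mkcond -big_split.
  apply: ler_sum => K _ /=.
  have eK : (#|K|%:R : R) = (#|K|%:R / n%:R) * n%:R by rewrite mulfVK // gt_eqF.
  set u := #|K|%:R / n%:R in eK *.
  case: ifP => [H | _]; last first.
    by apply: addr_ge0; case: ifP => _; rewrite ?pi_ge0.
  have : (n%:R * (q + t) <= #|K|%:R) \/ (#|K|%:R <= n%:R * (q - t)).
    by move: H; rewrite ltr_normr => /orP [h|h]; [left|right]; rewrite eK; nra.
  case=> h.
    rewrite ifT //.
    by rewrite lerDl; case: ifP => // _; exact: pi_ge0.
  rewrite [X in _ <= _ + X]ifT //.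
  by rewrite lerDr; case: ifP => // _; exact: pi_ge0.
rewrite mulr2n mulrDl mul1r; apply: lerD.
  apply: (le_trans (tail_up _ s0)).
  set y := expR s.
  have h1 : 1 - s <= expR (- s) by have := expR_ge1Dx (- s).
  have h2 : y * expR (- s) = 1 by rewrite /y -expRD subrr expR0.
  have y1 : 1 <= y by rewrite /y; have := expR_ge1Dx s; lra.
  have h3 : y * (1 - s) <= 1 by rewrite -h2; apply: ler_wpM2l; lra.
  have hy : y - 1 <= s + 2 * s ^+ 2 by rewrite /s in h3 *; nra.
  have E1 : (1 + (y - 1) * q) ^+ n <= expR ((y - 1) * q) ^+ n.
    apply: lerXn2r; rewrite ?nnegrE ?expR_ge0 //; last exact: expR_ge1Dx.
    by apply: addr_ge0 => //; apply: mulr_ge0 => //; lra.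
  apply: (le_trans (ler_wpM2l (expR_ge0 _) E1)).
  rewrite -expRM_natl -expRD ler_expR.
  have h4 : (y - 1) * q <= s * q + 2 * s ^+ 2.
    have a1 := ler_wpM2r q0 hy.
    have a2 : 2 * s ^+ 2 * q <= 2 * s ^+ 2 * 1.
      by apply: ler_wpM2l => //; apply: mulr_ge0 => //; apply: sqr_ge0.
    lra.
  have h5 : n%:R * ((y - 1) * q) <= n%:R * (s * q + 2 * s ^+ 2).
    by apply: ler_wpM2l => //; exact: ltW.
  rewrite /s in h5 *; lra.
apply: (le_trans (tail_lo _ s0)).
set y := expR (- s).
have h1 : 1 + s <= expR s by have := expR_ge1Dx s.
have h2 : y * expR s = 1 by rewrite /y -expRD addNr expR0.
have y0 : 0 <= y by exact: expR_ge0.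
have h3 : y * (1 + s) <= 1 by rewrite -[X in _ <= X]h2; nra.
have hy : y - 1 <= - s + s ^+ 2 by nra.
have E1 : (1 + (y - 1) * q) ^+ n <= expR ((y - 1) * q) ^+ n.
  apply: lerXn2r; rewrite ?nnegrE ?expR_ge0 //; last exact: expR_ge1Dx.
  by have yq := mulr_ge0 y0 q0; lra.
apply: (le_trans (ler_wpM2l (expR_ge0 _) E1)).
rewrite -expRM_natl -expRD ler_expR.
have h4 : (y - 1) * q <= - s * q + s ^+ 2.
  have a1 := ler_wpM2r q0 hy.
  have a2 : s ^+ 2 * q <= s ^+ 2 * 1 by apply: ler_wpM2l => //; apply: sqr_ge0.
  lra.
have h5 : n%:R * ((y - 1) * q) <= n%:R * (- s * q + s ^+ 2).
  by apply: ler_wpM2l => //; exact: ltW.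
have h6 : 0 <= n%:R * t ^+ 2 by apply: mulr_ge0; [exact: ltW | exact: sqr_ge0].
rewrite /s in h5 *; lra.
Qed.

End Chernoff.


Section Det.
Variable R : realType.

Definition cnt m d (B : 'M[R]_(m, d)) (x : 'rV[R]_d) : nat :=
  #|[set i : 'I_m | [forall k, B i k <= x ord0 k]]%classic|.

Lemma cntE m d (B : 'M[R]_(m, d)) (x : 'rV[R]_d) :
  cnt B x = #|[set i : 'I_m | [forall k, B i k <= x ord0 k]]%SET|.
Proof. by apply: eq_card => i; apply/idP/idP; rewrite in_setE inE. Qed.
Definition vol d (x : 'rV[R]_d) : R := \prod_(k < d) x ord0 k.
Definition Phi m d (B : 'M[R]_(m, d)) (x : 'rV[R]_d) : R :=
  `| (cnt B x)%:R / m%:R - vol x |.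

Lemma discE m d (B : 'M[R]_(m, d)) : disc B = sup (Phi B @` cube d).
Proof. by []. Qed.

Lemma vol01 d (x : 'rV[R]_d) : cube d x -> 0 <= vol x <= 1.
Proof.
move=> cx; apply/andP; split; first by apply: prodr_ge0 => k _; have /andP[] := cx k.
by apply: prodr_ile1 => k _; exact: cx.
Qed.

Lemma F01 m d (B : 'M[R]_(m, d)) x : 0 <= ((cnt B x)%:R / m%:R : R) <= 1.
Proof.
apply/andP; split; first by rewrite divr_ge0 ?ler0n.
case: m B => [|m] B; first by rewrite invr0 mulr0.
rewrite ler_pdivrMr ?ltr0n // mul1r ler_nat.
by apply: leq_trans (max_card _) _; rewrite card_ord.
Qed.

Lemma Phi_le2 m d (B : 'M[R]_(m, d)) x : cube d x -> Phi B x <= 2.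
Proof.
move=> cx; have := F01 B x; have := vol01 cx; rewrite /Phi ler_norml.
move=> /andP[? ?] /andP[? ?]; apply/andP; split; lra.
Qed.

Lemma cube0 d : cube d (0 : 'rV[R]_d).
Proof. by move=> k; rewrite mxE lexx ler01. Qed.

Lemma has_sup_Phi m d (B : 'M[R]_(m, d)) : has_sup (Phi B @` cube d).
Proof.
split; first by exists (Phi B 0), 0; [exact: cube0|].
by exists 2 => _ [x cx <-]; exact: Phi_le2.
Qed.

Lemma disc_ge m d (B : 'M[R]_(m, d)) x : cube d x -> Phi B x <= disc B.
Proof.
move=> cx; rewrite discE; apply: sup_upper_bound; first exact: has_sup_Phi.
by exists x.
Qed.

Lemma disc_le m d (B : 'M[R]_(m, d)) t : (forall x, cube d x -> Phi B x <= t) -> disc B <= t.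
Proof.
move=> H; rewrite discE; apply: ge_sup; first by exists (Phi B 0), 0; [exact: cube0|].
by move=> _ [x cx <-]; exact: H.
Qed.

Lemma prod_diff d (a b : 'I_d -> R) : (forall k, 0 <= a k <= 1) -> (forall k, 0 <= b k <= 1) ->
  `| \prod_k a k - \prod_k b k | <= \sum_k `|a k - b k|.
Proof.
elim: d a b => [|d IH] a b a01 b01; first by rewrite !big_ord0 subrr normr0.
rewrite !big_ord_recl.
set A := \prod_(i < d) a (lift ord0 i); set B := \prod_(i < d) b (lift ord0 i).
have hA : 0 <= A <= 1.
  by apply/andP; split; [apply: prodr_ge0 => k _; have /andP[] := a01 (lift ord0 k)
                        | apply: prodr_ile1 => k _; exact: a01].
have hB : 0 <= B <= 1.
  by apply/andP; split; [apply: prodr_ge0 => k _; have /andP[] := b01 (lift ord0 k)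
                        | apply: prodr_ile1 => k _; exact: b01].
have IH' := IH (fun k => a (lift ord0 k)) (fun k => b (lift ord0 k)) (fun k => a01 _) (fun k => b01 _).
rewrite -/A -/B in IH'.
have e : a ord0 * A - b ord0 * B = (a ord0 - b ord0) * A + b ord0 * (A - B) by ring.
rewrite e; apply: (le_trans (ler_normD _ _)); apply: lerD.
  rewrite normrM; rewrite -[X in _ <= X]mulr1; apply: ler_wpM2l => //.
  by rewrite ger0_norm; case/andP: hA.
rewrite normrM; apply: (le_trans _ IH'); rewrite -[X in _ <= X]mul1r; apply: ler_wpM2r => //.
by have /andP[? ?] := b01 ord0; rewrite ger0_norm.
Qed.

Lemma cnt_mono m d (B : 'M[R]_(m, d)) (x y : 'rV[R]_d) : (forall k, x ord0 k <= y ord0 k) -> (cnt B x <= cnt B y)%N.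
Proof.
move=> xy; rewrite !cntE; apply: subset_leq_card; apply/fintype.subsetP => i; rewrite !inE => /forallP H.
by apply/forallP => k; apply: le_trans (H k) (xy k).
Qed.

Lemma vol_mono d (x y : 'rV[R]_d) : (forall k, 0 <= x ord0 k <= y ord0 k) -> vol x <= vol y.
Proof. by move=> H; apply: ler_prod => k _; exact: H. Qed.


Definition gpt d N (h : {ffun 'I_d -> 'I_N.+1}) : 'rV[R]_d :=
  \row_(k < d) ((h k : nat)%:R / N%:R).

Lemma Fmono m d (B : 'M[R]_(m, d)) (x y : 'rV[R]_d) : (forall k, x ord0 k <= y ord0 k) ->
  (cnt B x)%:R / m%:R <= (cnt B y)%:R / m%:R :> R.
Proof.
move=> xy; apply: ler_wpM2r; first by rewrite invr_ge0 ler0n.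
by rewrite ler_nat; exact: cnt_mono.
Qed.

Lemma grid_bound m d N (B : 'M[R]_(m, d)) (tau : R) :
  (0 < N)%N -> (forall h : {ffun 'I_d -> 'I_N.+1}, Phi B (gpt h) <= tau) ->
  forall x, cube d x -> Phi B x <= tau + d%:R / N%:R.
Proof.
move=> N0 H x cx.
have NR : (0:R) < N%:R by rewrite ltr0n.
pose lo k := Num.truncn (N%:R * x ord0 k).
have hx k : 0 <= x ord0 k <= 1 := cx k.
have Nx0 k : 0 <= N%:R * x ord0 k by have /andP[? ?] := hx k; apply: mulr_ge0 => //; exact: ltW.
have lo_lt k : (lo k < N.+1)%N.
  rewrite ltnS /lo truncn_le_nat; have /andP[? ?] := hx k.
  have : N%:R * x ord0 k <= N%:R by rewrite -[X in _ <= X]mulr1; apply: ler_wpM2l => //; exact: ltW.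
  rewrite -natr1; lra.
have hi_lt k : (minn (lo k).+1 N < N.+1)%N by rewrite ltnS geq_minr.
pose hlo := [ffun k => Ordinal (lo_lt k)]; pose hhi := [ffun k => Ordinal (hi_lt k)].
have glo k : gpt hlo ord0 k = (lo k)%:R / N%:R by rewrite mxE ffunE.
have ghi k : gpt hhi ord0 k = (minn (lo k).+1 N)%:R / N%:R by rewrite mxE ffunE.
have f1 k : 0 <= gpt hlo ord0 k <= x ord0 k.
  rewrite glo divr_ge0 ?ler0n //= ler_pdivrMr // mulrC.
  by rewrite truncn_le Nx0.
have f2 k : x ord0 k <= gpt hhi ord0 k.
  rewrite ghi ler_pdivlMr // mulrC; case: (leqP (lo k).+1 N) => h.
    apply: ltW; exact: truncnS_gt.
  have /andP[? ?] := hx k.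
  by rewrite -[X in _ <= X]mulr1; apply: ler_wpM2l => //; exact: ltW.
have f3 k : gpt hhi ord0 k - gpt hlo ord0 k <= 1 / N%:R.
  rewrite ghi glo -mulrBl ler_pM2r ?invr_gt0 //.
  have h := geq_minl (lo k).+1 N; rewrite -(ler_nat R) -natr1 in h; lra.
have f4 k : gpt hhi ord0 k <= 1.
  rewrite ghi ler_pdivrMr // mul1r ler_nat; exact: geq_minr.
have Fl := Fmono B (fun k => (andP (f1 k)).2).
have Fh := Fmono B f2.
have Vl : vol (gpt hlo) <= vol x by apply: vol_mono.
have Vh : vol x <= vol (gpt hhi).
  by apply: vol_mono => k; rewrite f2 andbT; have /andP[? ?] := hx k.
have Vd : vol (gpt hhi) - vol (gpt hlo) <= d%:R / N%:R.
  have := prod_diff (a := fun k => gpt hhi ord0 k) (b := fun k => gpt hlo ord0 k).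
  move=> /(_ _ _) H1.
  have H2 : `|vol (gpt hhi) - vol (gpt hlo)| <= \sum_(k < d) `|gpt hhi ord0 k - gpt hlo ord0 k|.
    apply: H1 => k.
      by rewrite f4 andbT; have /andP[? ?] := f1 k; have := f2 k; lra.
    by have /andP[? ?] := f1 k; have /andP[? ?] := hx k; apply/andP; split; lra.
  apply: le_trans (ler_norm _) (le_trans H2 _).
  apply: (@le_trans _ _ (\sum_(k < d) 1 / N%:R)).
    apply: ler_sum => k _; rewrite ger0_norm; first exact: f3.
    by have := f2 k; have /andP[? ?] := f1 k; lra.
  by rewrite sumr_const card_ord -[X in X <= _]mulr_natl mul1r.
have Hl := H hlo; have Hh := H hhi.
move: Hl Hh; rewrite /Phi !ler_norml => /andP[? ?] /andP[? ?].
apply/andP; split; lra.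
Qed.

Lemma approx1 m (b : 'I_m -> R) (xk e : R) : 0 <= xk <= 1 -> 0 < e ->
  exists r : rat, [/\ xk <= (ratr r : R) <= 1, ratr r - xk <= e & forall i, b i <= ratr r -> b i <= xk].
Proof.
move=> /andP[x0 x1] e0.
case: (eqVneq xk 1) => [->|xn1].
  exists 1; rewrite rmorph1 lexx subrr; split => //; exact: ltW.
have xl1 : xk < 1 by rewrite lt_neqAle xn1 x1.
pose mn := \big[Num.min/1]_(i | xk < b i) b i.
have xmn : xk < mn by apply: lt_bigmin.
have mn1 : mn <= 1 by apply: bigmin_le_id.
pose del := Num.min (mn - xk) e.
have d0 : 0 < del by rewrite lt_min subr_gt0 xmn e0.
have dm : del <= mn - xk by rewrite ge_min lexx.
have de : del <= e by rewrite ge_min lexx orbT.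
have [r] : exists r : rat, ratr r \in `]xk, xk + del[ by apply: rat_in_itvoo; rewrite ltrDl.
rewrite in_itv /= => /andP[rl ru].
exists r; split.
- apply/andP; split; lra.
- lra.
- move=> i bi; rewrite leNgt; apply/negP => xb.
  have : mn <= b i by apply: bigmin_le_cond.
  lra.
Qed.

End Det.

Lemma approx (R : realType) m d (B : 'M[R]_(m, d)) x (e : R) : cube d x -> 0 < e ->
  exists r : {ffun 'I_d -> rat}, cube d (\row_k (ratr (r k) : R)) /\
     Phi B x <= Phi B (\row_k ratr (r k)) + e.
Proof.
move=> cx e0.
have d1 : (0 : R) < d%:R + 1 by rewrite ltr_pwDr ?ler0n.
pose e' := e / (d%:R + 1).
have e'0 : 0 < e' by rewrite divr_gt0.
have ee : e' * (d%:R + 1) = e by rewrite divfK // gt_eqF.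
have : forall k : 'I_d, exists r : rat, [/\ x ord0 k <= (ratr r : R) <= 1,
      ratr r - x ord0 k <= e' & forall i, B i k <= ratr r -> B i k <= x ord0 k].
  by move=> k; apply: approx1 => //; exact: cx.
case/fin_all_exists => rf Hr.
exists [ffun k => rf k]; set y := \row_k _.
have yk k : y ord0 k = ratr (rf k) by rewrite mxE ffunE.
have cy : cube d y.
  move=> k; rewrite yk; case: (Hr k) => /andP[h1 h2] _ _.
  by have /andP[? ?] := cx k; apply/andP; split => //; apply: le_trans h1.
split => //.
rewrite /Phi.
have -> : cnt B y = cnt B x.
  rewrite !cntE; apply: eq_card => i; rewrite !inE; apply/forallP/forallP => H k.
    by case: (Hr k) => _ _ h; apply: h; rewrite -yk; exact: H k.
  by case: (Hr k) => /andP[h _] _ _; rewrite yk; exact: le_trans (H k) h.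
set F := _ / _.
have -> : F - vol x = (F - vol y) + (vol y - vol x) by ring.
apply: le_trans (ler_normD _ _) (lerD (lexx _) _).
have H1 := prod_diff (a := fun k => y ord0 k) (b := fun k => x ord0 k) cy cx.
apply: le_trans H1 _.
apply: (@le_trans _ _ (\sum_(k < d) e')).
  apply: ler_sum => k _; rewrite yk; case: (Hr k) => /andP[h1 _] h2 _.
  by rewrite ger0_norm // subr_ge0.
rewrite sumr_const card_ord -[X in X <= _]mulr_natl.
have e1 : 0 <= e' by lra.
lra.
Qed.

Section Meas.
Variables (R : realType) (dT : measure_display) (T : measurableType dT).
Variable (P : probability T R).

Lemma meas_le (f : T -> R) c : measurable_fun setT f -> measurable [set w | f w <= c].
Proof.
move=> mf; have := mf measurableT _ (measurable_itv `]-oo, c]); rewrite setTI.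
congr measurable; apply/seteqP; split => w /=; rewrite in_itv /=; done.
Qed.

Variables (m d : nat) (B : T -> 'M[R]_(m, d)).
Hypothesis mB : forall i k, measurable_fun setT (fun w => B w i k).

Lemma mRowB (y : 'rV[R]_d) i : measurable [set w | [forall k, B w i k <= y ord0 k]].
Proof. by apply: meas_bool => k; apply: meas_le. Qed.

Lemma meas_Phi_le y t : measurable [set w | Phi (B w) y <= t].
Proof.
have := meas_pat P (mfib (mRowB y)) (fun K => `| #|K|%:R / m%:R - vol y | <= t).
congr measurable; apply/seteqP; split => w /=; by rewrite /Phi cntE.
Qed.

Lemma meas_disc_le t : measurable [set w | disc (B w) <= t].
Proof.
pose ry (r : {ffun 'I_d -> rat}) : 'rV[R]_d := \row_k ratr (r k).
pose S j := [set w | forall r, unpickle j = Some r -> cube d (ry r) -> Phi (B w) (ry r) <= t].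
rewrite (_ : [set w | _] = \bigcap_(j in setT) S j).
  apply: bigcap_measurable; first by exists 0%N.
  move=> j _; rewrite /S; case: (unpickle j) => [r0|].
    have [c|nc] := pselect (cube d (ry r0)).
      rewrite (_ : [set w | _] = [set w | Phi (B w) (ry r0) <= t]); first exact: meas_Phi_le.
      by apply/seteqP; split => w /= H; [exact: H | move=> r [<-]].
    rewrite (_ : [set w | _] = setT); first exact: measurableT.
    by apply/seteqP; split => w //= _ r [<-].
  rewrite (_ : [set w | _] = setT); first exact: measurableT.
  by apply/seteqP; split => w.
apply/seteqP; split => w /=.
  move=> H j _ r _ cr; apply: le_trans H; exact: disc_ge.
move=> H; apply: disc_le => x cx; apply/ler_addgt0Pr => e e0.
have [r [cr Hr]] := approx (B w) cx e0.
apply: le_trans Hr _; rewrite lerD2r.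
by apply: (H (pickle r)) => //; rewrite pickleK.
Qed.

End Meas.

Section Asym.
Variable R : realType.

Lemma ev_pow (e K : R) : 0 < e -> exists N : nat, forall n, (N <= n)%N -> K <= n%:R `^ e.
Proof.
move=> e0; pose K' := Num.max K 1.
have K'0 : 0 < K' by rewrite lt_max ltr01 orbT.
exists (Num.truncn (K' `^ e^-1)).+1 => n hn.
have h1 : K' `^ e^-1 <= n%:R.
  apply: ltW; apply: (lt_le_trans (truncnS_gt _)); by rewrite ler_nat.
apply: (@le_trans _ _ K'); first by rewrite le_max lexx.
have -> : K' = (K' `^ e^-1) `^ e by rewrite -powRrM mulVf ?gt_eqF // powRr1 // ltW.
by apply: ge0_ler_powR; rewrite ?nnegrE ?powR_ge0 ?ler0n // ltW.
Qed.

Lemma ev_max (P1 P2 : nat -> Prop) :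
  (exists N, forall n, (N <= n)%N -> P1 n) -> (exists N, forall n, (N <= n)%N -> P2 n) ->
  exists N, forall n, (N <= n)%N -> P1 n /\ P2 n.
Proof.
move=> [N1 H1] [N2 H2]; exists (maxn N1 N2) => n hn; split.
  by apply: H1; apply: leq_trans hn; exact: leq_maxl.
by apply: H2; apply: leq_trans hn; exact: leq_maxr.
Qed.

Lemma ln_le_id (x : R) : 0 < x -> ln x <= x.
Proof.
move=> x0; have := expR_ge1Dx (ln x); rewrite lnK ?posrE //; lra.
Qed.

Lemma powRDn (n : nat) (r s : R) : (0 < n)%N -> n%:R `^ r * n%:R `^ s = n%:R `^ (r + s).
Proof. by move=> n0; rewrite powRD // pnatr_eq0 -lt0n n0 implybT. Qed.

Lemma asym (a b c K C : R) (lq : nat -> R) (N0 : nat) :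
  0 < b -> b < a -> 0 <= K -> (forall n, (N0 <= n)%N -> lq n <= c * n%:R `^ b) ->
  exists N, forall n, (N <= n)%N -> C + K * (lq n + ln n%:R) <= n%:R `^ a / 32.
Proof.
move=> b0 ba K0 Hq.
pose c' := Num.max c 0.
have c'0 : 0 <= c' by rewrite le_max lexx orbT.
have a0 : 0 < a by lra.
have ab0 : 0 < a - b by lra.
have a20 : 0 < a / 2 by rewrite divr_gt0.
have [N1 H1] := ev_pow (96 * K * c') ab0.
have [N2 H2] := ev_pow (192 * K / a) a20.
have [N3 H3] := ev_pow (96 * C) a0.
exists (maxn (maxn N0 1) (maxn N1 (maxn N2 N3))) => n hn.
have hN0 : (N0 <= n)%N by apply: leq_trans hn; rewrite leq_max leq_max leqnn.
have n0 : (0 < n)%N by apply: leq_trans hn; rewrite leq_max leq_max leqnn orbT.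
have := H1 n (leq_trans (leq_trans (leq_maxl _ _) (leq_maxr _ _)) hn).
have := H2 n (leq_trans (leq_trans (leq_maxl _ _) (leq_trans (leq_maxr _ _) (leq_maxr _ _))) hn).
have := H3 n (leq_trans (leq_trans (leq_maxr _ _) (leq_trans (leq_maxr _ _) (leq_maxr _ _))) hn).
move=> h3 h2 h1.
have nR : (0 : R) < n%:R by rewrite ltr0n.
have eab : n%:R `^ (a - b) * n%:R `^ b = n%:R `^ a by rewrite powRDn // subrK.
have ea2 : n%:R `^ (a / 2) * n%:R `^ (a / 2) = n%:R `^ a by rewrite powRDn //; congr (_ `^ _); lra.
have pb : 0 <= n%:R `^ b := powR_ge0 _ _.
have pa2 : 0 <= n%:R `^ (a / 2) := powR_ge0 _ _.
have t1 : K * lq n <= n%:R `^ a / 96.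
  have s1 : K * lq n <= K * (c' * n%:R `^ b).
    apply: ler_wpM2l => //; apply: le_trans (Hq n hN0) _; apply: ler_wpM2r => //.
    by rewrite le_max lexx.
  apply: le_trans s1 _; rewrite -eab.
  have : K * c' * n%:R `^ b <= n%:R `^ (a - b) * n%:R `^ b / 96.
    have := ler_wpM2r pb h1; nra.
  by rewrite mulrA.
have t2 : K * ln n%:R <= n%:R `^ a / 96.
  have l1 : ln n%:R = 2 / a * ln (n%:R `^ (a / 2)).
    have h : 2 / a * (a / 2) = 1 by field; rewrite gt_eqF.
    by rewrite ln_powR mulrA h mul1r.
  have l2 : ln (n%:R `^ (a / 2)) <= n%:R `^ (a / 2) by apply: ln_le_id; exact: powR_gt0.
  rewrite l1 -ea2.
  have l3 : K * (2 / a) * ln (n%:R `^ (a / 2)) <= K * (2 / a) * n%:R `^ (a / 2).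
    by apply: ler_wpM2l => //; apply: mulr_ge0 => //; apply: divr_ge0 => //; exact: ltW.
  have l4 : 192 * K / a * n%:R `^ (a / 2) <= n%:R `^ (a / 2) * n%:R `^ (a / 2).
    exact: ler_wpM2r.
  have l5 : K * (2 / a) = (192 * K / a) / 96 by field; rewrite gt_eqF.
  rewrite mulrA; apply: le_trans l3 _; rewrite l5; lra.
lra.
Qed.

End Asym.


Lemma leb_le (R : realType) (y : R) : 0 <= y <= 1 ->
  (@lebesgue_measure R) ([set` `]-oo, y]] `&` `[0, 1[) = y%:E.
Proof.
move=> /andP[y0 y1].
case: (eqVneq y 1) => [->|yn1].
  rewrite (_ : _ `&` _ = [set` `[0, 1[]); last first.
    apply/seteqP; split => x /=; rewrite !in_itv /=; first by case.
    by move=> h; split => //; case/andP: h => _ /ltW.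
  by rewrite lebesgue_measure_itv /= lte_fin ltr01 /= oppr0 adde0.
have yl1 : y < 1 by rewrite lt_neqAle yn1 y1.
rewrite (_ : _ `&` _ = [set` `[0, y]]); last first.
  apply/seteqP; split => x /=; rewrite !in_itv /=.
    by case=> -> /andP[->].
  move=> /andP[h1 h2]; split => //; rewrite h1 /=; exact: le_lt_trans h2 yl1.
rewrite lebesgue_measure_itv /= lte_fin.
case: ltP => h; first by rewrite oppr0 adde0.
by rewrite (_ : y = 0) //; apply/le_anti; rewrite h y0.
Qed.

Section FromA5.
Variables (R : realType) (dT : measure_display) (T : measurableType dT).
Variable (P : probability T R).
Variables (p : nat -> nat) (X : forall n, T -> 'M[R]_(n, p n)).
Hypothesis HA5 : A5 P X.

Lemma subm_entry n w (A : {set 'I_(p n)}) i k : subm (X n w) A i k = X n w i (enum_val k).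
Proof. by rewrite /subm mxE. Qed.

Lemma mB n (A : {set 'I_(p n)}) i k : measurable_fun setT (fun w => subm (X n w) A i k).
Proof.
have [h _] := HA5 n.
rewrite (_ : (fun w => _) = (fun w => X n w i (enum_val k))); first exact: h.
by apply: funext => w; exact: subm_entry.
Qed.

Lemma HI_sub n (A : {set 'I_(p n)}) (y : 'rV[R]_#|A|) : cube _ y -> forall J : {set 'I_n},
  mu P [set w | J \subset [set i | [forall k, subm (X n w) A i k <= y ord0 k]]%SET] = vol y ^+ #|J|.
Proof.
move=> cy J.
pose Y (j : 'I_(p n)) := \sum_(k | enum_val k == j) y ord0 k.
have YE k : Y (enum_val k) = y ord0 k.
  by rewrite /Y (big_pred1 k) // => k'; exact: (inj_eq enum_val_inj).
have YA j (jA : j \in A) : Y j = y ord0 (enum_rank_in jA j).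
  by rewrite -{1}(enum_rankK_in jA jA) YE.
have [_ [Hm Hind]] := HA5 n.
pose Bs (ij : 'I_n * 'I_(p n)) : set R := [set` `]-oo, Y ij.2]].
have mBs ij : measurable (Bs ij) by exact: measurable_itv.
have e1 : [set w | J \subset [set i | [forall k, subm (X n w) A i k <= y ord0 k]]%SET] =
   [set w | forall ij, ij \in finset.setX J A -> Bs ij (X n w ij.1 ij.2)].
  apply/seteqP; split => w /=.
    move=> /fintype.subsetP H [i j]; rewrite finset.in_setX /= => /andP[iJ jA].
    have := H i iJ; rewrite inE => /forallP /(_ (enum_rank_in jA j)).
    by rewrite subm_entry enum_rankK_in // /Bs /= in_itv /= (YA _ jA).
  move=> H; apply/fintype.subsetP => i iJ; rewrite inE; apply/forallP => k.
  have := H (i, enum_val k); rewrite finset.in_setX iJ enum_valP /= => /(_ isT).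
  by rewrite /Bs /= in_itv /= YE subm_entry.
rewrite e1 /mu Hind //.
rewrite (eq_bigr (fun ij => (Y ij.2)%:E)); last first.
  move=> [i j]; rewrite finset.in_setX /= => /andP[_ jA].
  rewrite Hm // leb_le // (YA _ jA); exact: cy.
rewrite prodEFin /=.
rewrite (eq_bigl (fun ij => (ij.1 \in J) && (ij.2 \in A))); last by move=> [i j]; rewrite finset.in_setX.
rewrite -(pair_big_dep (fun i => i \in J) (fun i j => j \in A) (fun i j => Y j)) /=.
rewrite (eq_bigr (fun i => vol y)); first by rewrite prodr_const.
by move=> i _; rewrite big_enum_val /vol; apply: eq_bigr => k _; rewrite YE.
Qed.

Lemma bad_bound n (A : {set 'I_(p n)}) (y : 'rV[R]_#|A|) tau : cube _ y -> 0 < tau -> tau <= 1 ->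
  (0 < n)%N ->
  mu P [set w | tau < Phi (subm (X n w) A) y] <= 2 * expR (- (n%:R * tau ^+ 2 / 8)).
Proof.
move=> cy t0 t1 n0.
have [q0 q1] : 0 <= vol y /\ vol y <= 1 by have /andP[] := vol01 cy.
have := dev (mRowB (@mB n A) y) q0 q1 (HI_sub cy) t0 t1 n0.
congr (mu P _ <= _); apply/seteqP; split => w /=; by rewrite /Phi cntE.
Qed.

End FromA5.

Lemma meas_exists (dT : measure_display) (T : measurableType dT) (I : finType) (Q : pred I) (E : I -> set T) :
  (forall i, measurable (E i)) -> measurable [set w | exists i, Q i /\ E i w].
Proof.
move=> mE.
rewrite (_ : [set w | _] = ~` [set w | forall i, Q i -> (~` E i) w]).
  by apply: measurableC; apply: meas_forall => i; exact: measurableC.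
apply/seteqP; split => w /=.
  by move=> [i [Qi Ei]] H; exact: H i Qi Ei.
move=> H; apply: contrapT => nE; apply: H => i Qi Ei; apply: nE; by exists i.
Qed.

Lemma card_small q K : (#|[set A : {set 'I_q} | (#|A| <= K)%N]%SET| <= q.+1 ^ K)%N.
Proof.
pose phi (h : {ffun 'I_K -> option 'I_q}) : {set 'I_q} := [set x | Some x \in codom h]%SET.
have sub : [set A : {set 'I_q} | (#|A| <= K)%N]%SET \subset [set phi h | h in [set: {ffun 'I_K -> option 'I_q}]%SET]%SET.
  apply/fintype.subsetP => A; rewrite inE => hA.
  apply/imsetP; exists [ffun j : 'I_K => nth None [seq Some x | x <- enum A] j]; first by rewrite inE.
  apply/setP => x; rewrite inE; apply/idP/idP.
    move=> xA.
    have ix : (index x (enum A) < K)%N.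
      by apply: leq_trans hA; rewrite cardE index_mem mem_enum.
    apply/codomP; exists (Ordinal ix); rewrite ffunE /=.
    rewrite (nth_map x); last by rewrite index_mem mem_enum.
    by rewrite nth_index // mem_enum.
  move/codomP => [j]; rewrite ffunE.
  case: (ltnP j (size [seq Some x | x <- enum A])) => hj; last by rewrite nth_default.
  move=> e; have := mem_nth None hj; rewrite -e (mem_map Some_inj) mem_enum //.
apply: (leq_trans (subset_leq_card sub)); apply: (leq_trans (leq_imset_card _ _)).
by rewrite finset.cardsT card_ffun card_option !card_ord.
Qed.

Lemma card_A0 q p0 : (#|A0 q p0| <= p0)%N.
Proof.
rewrite cardE -(size_map val) -[X in (_ <= X)%N](size_iota 0).
apply: uniq_leq_size; first by rewrite (map_inj_uniq val_inj) enum_uniq.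
move=> x /mapP [k]; rewrite mem_enum inE => kp ->; by rewrite mem_iota.
Qed.

Lemma card_union_le q (A B : {set 'I_q}) : (#|A :|: B| <= #|A| + #|B|)%N.
Proof. by rewrite cardsU leq_subr. Qed.

Definition Fam q p0 M (A : {set 'I_q}) :=
  [|| A == A0 q p0, inU2 A, inU3 p0 A | inU4 p0 M A].

Lemma card_Fam q p0 M (A : {set 'I_q}) : (1 <= p0)%N -> (p0 <= M)%N -> Fam p0 M A ->
  (#|A| <= p0 + M)%N.
Proof.
move=> p01 p0M; case/or4P => [/eqP->|/eqP->|/existsP[I /and3P[_ /eqP c1 /eqP->]]|/existsP[I /and3P[_ /eqP c1 /eqP->]]].
- by apply: leq_trans (card_A0 _ _) _; exact: leq_addr.
- exact: (leq_add p01 (leq_trans p01 p0M)).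
- apply: leq_trans (card_union_le _ _) _; rewrite c1.
  by apply: leq_add; [exact: card_A0 | exact: leq_trans p01 p0M].
- apply: leq_trans (card_union_le _ _) _; rewrite c1; apply: leq_add; first exact: card_A0.
  exact: leq_subr.
Qed.

Section Grid.
Variable R : realType.

Definition gptc (D N dd : nat) (c : {ffun 'I_D.+1 -> 'I_N.+1}) : 'rV[R]_dd :=
  \row_(k < dd) ((c (inord k) : nat)%:R / N%:R).

Lemma gptc_surj D N dd (h : {ffun 'I_dd -> 'I_N.+1}) : (dd <= D.+1)%N ->
  exists c : {ffun 'I_D.+1 -> 'I_N.+1}, @gptc D N dd c = @gpt R dd N h.
Proof.
move=> hd.
exists [ffun j : 'I_D.+1 => if (insub (val j) : option 'I_dd) is Some k then h k else ord0].
apply/rowP => k; rewrite !mxE ffunE.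
have e : val (inord k : 'I_D.+1) = k by rewrite /= inordK //; exact: leq_trans (ltn_ord k) hd.
by rewrite e valK.
Qed.

Lemma gptc_cube D N dd (c : {ffun 'I_D.+1 -> 'I_N.+1}) : (0 < N)%N -> cube dd (@gptc D N dd c).
Proof.
move=> N0 k; rewrite mxE; apply/andP; split; first by rewrite divr_ge0 ?ler0n.
by rewrite ler_pdivrMr ?ltr0n // mul1r ler_nat -ltnS.
Qed.

End Grid.


Lemma near_oo (Q : nat -> Prop) N : (forall n, (N <= n)%N -> Q n) -> \forall n \near \oo, Q n.
Proof. by move=> H; exists N => // n; exact: H. Qed.

Section Asym2.
Variable R : realType.

Lemma L1 (n : nat) (g : R) : (0 < n)%N ->
  n%:R * (n%:R `^ (- g) / 2) ^+ 2 / 8 = n%:R `^ (1 - 2 * g) / 32.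
Proof.
move=> n0.
have e1 : n%:R `^ (- g) ^+ 2 = n%:R `^ (- (2 * g)) :> R.
  by rewrite expr2 powRDn //; congr (_ `^ _); ring.
have e2 : n%:R * n%:R `^ (- (2 * g)) = n%:R `^ (1 - 2 * g) :> R.
  by rewrite -{1}(@powRr1 _ n%:R) ?ler0n // powRDn.
by rewrite expr_div_n e1 -e2; field.
Qed.

Lemma L2 (n : nat) (g : R) : (0 < n)%N -> 1 <= n%:R `^ g -> n%:R `^ (- g) <= 1.
Proof. by move=> n0 h; rewrite powRN invf_le1 // (lt_le_trans ltr01 h). Qed.

Lemma L3 (n : nat) (g D : R) : (0 < n)%N -> 2 * D <= n%:R `^ (1 - g) ->
  D / n%:R <= n%:R `^ (- g) / 2.
Proof.
move=> n0 h.
have nR : (0 : R) < n%:R by rewrite ltr0n.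
have e : n%:R `^ (1 - g) = n%:R `^ (- g) * n%:R :> R.
  by rewrite -{3}(@powRr1 _ n%:R) ?ler0n // powRDn // addrC.
rewrite ler_pdivrMr // mulrAC ler_pdivlMr //; lra.
Qed.

Lemma L4 (x K : nat) : (1 <= x)%N ->
  ((x.+1 ^ K)%N%:R : R) <= expR (K%:R * (ln 2 + ln x%:R)).
Proof.
move=> x1.
have xR : (1 : R) <= x%:R by rewrite ler1n.
rewrite natrX -lnM ?posrE ?ltr0n // expRM_natl lnK ?posrE; last by apply: mulr_gt0 => //; lra.
apply: lerXn2r; rewrite ?nnegrE ?ler0n // -?natr1; lra.
Qed.

End Asym2.

Section Main.
Variables (R : realType) (dT : measure_display) (T : measurableType dT).
Variable (P : probability T R).
Variables (p : nat -> nat) (p0 M : nat) (X : forall n, T -> 'M[R]_(n, p n)).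
Hypotheses (p01 : (1 <= p0)%N) (p0M : (p0 <= M)%N) (HA5 : A5 P X).

Definition target n (t : R) := [set w | [/\ Delta_p0 p0 (X n w) <= t,
  Delta_2 (X n w) <= t, Delta_p0_1 p0 (X n w) <= t & Delta_p0_M1 p0 M (X n w) <= t]].

Lemma targetE n t : 0 <= t ->
  target n t = [set w | forall A, Fam p0 M A -> disc (subm (X n w) A) <= t].
Proof.
move=> t0; apply/seteqP; split => w /=.
  case=> h1 h2 h3 h4 A; rewrite /Fam => /or4P [/eqP->|h|h|h] //.
  - by apply: le_trans h2; exact: (le_bigmax_cond _ _ h).
  - by apply: le_trans h3; exact: (le_bigmax_cond _ _ h).
  - by apply: le_trans h4; exact: (le_bigmax_cond _ _ h).
move=> H; split.
- by apply: H; rewrite /Fam eqxx.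
- by apply: bigmax_le => // A hA; apply: H; rewrite /Fam hA orbT.
- by apply: bigmax_le => // A hA; apply: H; rewrite /Fam hA !orbT.
- by apply: bigmax_le => // A hA; apply: H; rewrite /Fam hA !orbT.
Qed.

Lemma meas_target n t : 0 <= t -> measurable (target n t).
Proof.
move=> t0; rewrite targetE //; apply: meas_forall => A.
exact: (meas_disc_le P (@mB _ _ _ _ _ _ HA5 n A)).
Qed.

Lemma key n (t tau : R) : (0 < n)%N -> 0 < tau -> tau <= 1 ->
  tau + (p0 + M)%:R / n%:R <= t ->
  1 - mu P (target n t) <=
    ((p n).+1 ^ (p0 + M).+1 * n.+1 ^ (p0 + M).+1)%N%:R * (2 * expR (- (n%:R * tau ^+ 2 / 8))).
Proof.
move=> n0 t0 t1 ht.
have Dn : 0 <= (p0 + M)%:R / n%:R :> R by rewrite divr_ge0 ?ler0n.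
have tge : 0 <= t by lra.
set D := (p0 + M)%N.
pose bad (ac : {set 'I_(p n)} * {ffun 'I_D.+1 -> 'I_n.+1}) :=
  [set w | tau < Phi (subm (X n w) ac.1) (gptc R #|ac.1| ac.2)].
have mbad ac : measurable (bad ac).
  rewrite (_ : bad ac = ~` [set w | Phi (subm (X n w) ac.1) (gptc R #|ac.1| ac.2) <= tau]).
    exact/measurableC/(meas_Phi_le P (@mB _ _ _ _ _ _ HA5 n ac.1)).
  apply/seteqP; split => w /=; rewrite /bad /= ltNge; [by move/negP | by move/negP].
have sub : ~` target n t `<=` [set w | exists ac, Fam p0 M ac.1 /\ bad ac w].
  move=> w /= ntw; apply: contrapT => Hn; apply: ntw.
  rewrite (targetE n tge) /= => A FA.
  apply: disc_le => x cx.
  have hA : (#|A| <= D.+1)%N by apply: leq_trans (card_Fam p01 p0M FA) (leqnSn _).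
  have G : forall h : {ffun 'I_#|A| -> 'I_n.+1}, Phi (subm (X n w) A) (gpt R h) <= tau.
    move=> h; have [c ec] := @gptc_surj R D n #|A| h hA.
    rewrite -ec leNgt; apply/negP => hb; apply: Hn; by exists (A, c).
  apply: le_trans (grid_bound n0 G cx) _.
  apply: le_trans ht; rewrite lerD2l; apply: ler_wpM2r; first by rewrite invr_ge0 ler0n.
  by rewrite ler_nat; apply: card_Fam.
have mT := meas_target n tge.
have mU : measurable [set w | exists ac, Fam p0 M ac.1 /\ bad ac w] := meas_exists _ mbad.
rewrite -(mu_setC P mT).
apply: le_trans (mu_le P (measurableC mT) mU sub) _.
apply: le_trans (union_bound P _ mbad) _.
set beta := 2 * expR _.
have b0 : 0 <= beta by rewrite /beta mulr_ge0 ?expR_ge0.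
apply: (@le_trans _ _ (\sum_(ac in finset.setX [set A : {set 'I_(p n)} | (#|A| <= D.+1)%N]%SET
                                     [set: {ffun 'I_D.+1 -> 'I_n.+1}]%SET) beta)).
  rewrite big_mkcond [X in _ <= X]big_mkcond; apply: ler_sum => -[A c] _ /=.
  case: ifP => FA; last by case: ifP.
  rewrite ifT; first exact: (bad_bound HA5 (gptc_cube _ _ n0) t0 t1 n0).
  rewrite finset.in_setX !inE andbT; apply: leq_trans (card_Fam p01 p0M FA) (leqnSn _).
rewrite sumr_const -[X in X <= _]mulr_natl; apply: ler_wpM2r => //.
rewrite ler_nat finset.cardsX finset.cardsT card_ffun !card_ord; apply: leq_mul => //.
exact: card_small.
Qed.

End Main.

Unset Implicit Arguments. Set Strict Implicit.
Theorem lemma9 (R : realType) (dT : measure_display) (T : measurableType dT)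
  (P : probability T R)
  (p : nat -> nat) (p0 M : nat)
  (X : forall n, T -> 'M[R]_(n, p n))
  (f : forall n, 'rV[R]_(p n) -> R) (ft : forall n, 'rV[R]_p0 -> R) (eta : nat -> R)
  (beta0 : forall n, {set 'I_(p n)} -> R)
  (beta : forall n, {set 'I_(p n)} -> 'I_(p n) -> R)
  (g1 g2 g3 g4 g5 g6 g7 g10 : R) :
  (1 <= p0)%N -> (p0 <= M)%N -> (forall n, (p0 < p n)%N) ->
  (forall n, {within cube (p n), continuous (f n)}) ->
  (forall n, {within cube p0, continuous (ft n)}) ->
  (forall n, 0 < eta n) ->
  (forall n (A : {set 'I_(p n)}), bestlin (f n) A (beta0 n A) (beta n A)) ->
  A5 P X ->
  @A6 R p p0 M f ft eta beta0 beta g1 g2 g3 g4 g5 g6 g7 g10 ->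
  forall g0 : R, 0 < g0 -> g0 < (1 - g10) / 2 ->
  (fun n => P [set w | [/\ Delta_p0 p0 (X n w) <= n%:R `^ (- g0),
                          Delta_2 (X n w) <= n%:R `^ (- g0),
                          Delta_p0_1 p0 (X n w) <= n%:R `^ (- g0) &
                          Delta_p0_M1 p0 M (X n w) <= n%:R `^ (- g0)]])
    @ \oo --> 1%E.
Proof.
move=> p01 p0M pn _ _ _ _ HA5 HA6 g0 g00 g0l.
have := HA6; rewrite /A6 => -[_ [_ [_ [_ [_ [_ [_ [Hlog [_ [g10p [g101 _]]]]]]]]]]].
case: Hlog => c [N0 Hc].
set D := (p0 + M)%N.
pose a := 1 - 2 * g0.
have ba : g10 < a by rewrite /a; lra.
apply: cvg_EFin.
  apply: nearW => n; rewrite fin_num_measure //.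
  exact: (meas_target p0 M HA5 n (powR_ge0 _ _)).
apply/cvgrPdist_le => e e0.
have hq : forall n, (N0 <= n)%N -> (fun n => ln (p n)%:R) n <= c * n%:R `^ g10.
  by move=> n hn; apply: le_trans (ler_norm _) (Hc n hn _ erefl).
have [N1 H1] := asym (ln 2 + D.+1%:R * (2 * ln 2) - ln e) g10p ba (ler0n _ D.+1) hq.
have [N2 H2] := ev_pow 1 g00.
have g01 : 0 < 1 - g0 by lra.
have [N3 H3] := ev_pow (2 * D%:R) g01.
apply: (@near_oo _ (maxn 1 (maxn N1 (maxn N2 N3)))) => n hn.
change (`|1 - mu P (target p0 M X n (n%:R `^ (- g0)))| <= e).
have n0 : (0 < n)%N by apply: leq_trans hn; rewrite leq_max leqnn.
have hn1 : (N1 <= n)%N by apply: leq_trans hn; rewrite leq_max leq_max leqnn orbT.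
have hn2 : (N2 <= n)%N by apply: leq_trans hn; rewrite leq_max leq_max leq_max leqnn !orbT.
have hn3 : (N3 <= n)%N by apply: leq_trans hn; rewrite leq_max leq_max leq_max leqnn !orbT.
set t := n%:R `^ (- g0).
have tp : 0 < t by rewrite /t powR_gt0 // ltr0n.
have tl1 : t <= 1 by apply: L2 => //; exact: H2.
have t0 : 0 < t / 2 by lra.
have t1 : t / 2 <= 1 by lra.
have ht : t / 2 + D%:R / n%:R <= t.
  have := L3 n0 (H3 n hn3); rewrite -/t; lra.
have Kb := key p01 p0M HA5 n0 t0 t1 ht.
have mT := meas_target p0 M HA5 n (ltW tp).
have mu1 := mu_le1 P mT.
rewrite ger0_norm; last by lra.
apply: le_trans Kb _.
have hp : (1 <= p n)%N by apply: leq_trans (pn n); rewrite ltnS.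
have E1 := @L4 R (p n) D.+1 hp; have E2 := @L4 R n D.+1 n0.
rewrite natrM.
apply: (@le_trans _ _ (expR (D.+1%:R * (ln 2 + ln (p n)%:R)) * expR (D.+1%:R * (ln 2 + ln n%:R))
                      * (2 * expR (- (n%:R * (t / 2) ^+ 2 / 8))))).
  apply: ler_wpM2r; first by rewrite mulr_ge0 ?expR_ge0.
  by apply: ler_pM => //; rewrite ler0n.
rewrite /t L1 //.
have l2 : (0 : R) < 2 by [].
rewrite (_ : 2 * expR (- (n%:R `^ (1 - 2 * g0) / 32)) = expR (ln 2 - n%:R `^ (1 - 2 * g0) / 32)); last first.
  by rewrite expRD lnK ?posrE.
rewrite -!expRD -[X in _ <= X](@lnK R e) ?posrE // ler_expR.
have := H1 n hn1; rewrite /a; lra.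
Qed.
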